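(* Let $(x_1,\dots,x_n)$ be uniformly distributed on $\{x\in\{0,1\}^n:\sum_{j=1}^n x_j=s\}$, let $p=s/n$, let $a_1,\dots,a_n\in\mathbb{R}$, and let $t\in\mathbb{R}$ satisfy $|(a_j-a_k)t|\le\pi$ for all $1\le j,k\le n$. Then \[\Big|\mathbb{E}\big[e^{it\sum_{j=1}^n a_jx_j}\big]\Big|\le(n+1)\exp\big[-2p(1-p)t^2\operatorname{Var}[a_J]\,n/\pi^2\big],\] where $\operatorname{Var}[a_J]$ is the variance of $a_J$ for $J$ uniform on $[n]$. *)

(* Defs.v *)
From HB Require Import structures.
From mathcomp Require Import all_boot all_order all_algebra.
From mathcomp Require Import reals sequences exp trigo.
From mathcomp Require Import complex.
Set Implicit Arguments. Unset Strict Implicit. Unset Printing Implicit Defensive.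
Import Order.TTheory GRing.Theory Num.Theory.
Local Open Scope ring_scope.
Local Open Scope complex_scope.

Definition cexpi (R : realType) (theta : R) : R[i] := (cos theta +i* sin theta)%C.

Definition slice (n s : nat) : {set {ffun 'I_n -> bool}} :=
  [set x : {ffun 'I_n -> bool} | \sum_(j < n) (x j : nat) == s]%N.

Definition slice_charfun (R : realType) (n s : nat) (a : 'I_n -> R) (t : R) : R[i] :=
  (#|slice n s|%:R)^-1 *
    \sum_(x in slice n s) cexpi (t * \sum_(j < n) a j * (x j)%:R).

Definition meanJ (R : realType) (n : nat) (a : 'I_n -> R) : R :=
  (n%:R)^-1 * \sum_(j < n) a j.
Definition varJ (R : realType) (n : nat) (a : 'I_n -> R) : R :=
  (n%:R)^-1 * \sum_(j < n) (a j - meanJ a) ^+ 2.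

(* Main.v *)
Require Import Defs.
From HB Require Import structures.
From mathcomp Require Import all_boot all_order all_algebra.
From mathcomp Require Import reals sequences exp trigo.
From mathcomp Require Import complex.
From mathcomp Require Import all_classical all_reals all_analysis.
From mathcomp Require Import zify ring lra.
Import Order.TTheory GRing.Theory Num.Theory numFieldNormedType.Exports.

Definition bb (n s k : nat) := 'C(n, k) * s ^ k * (n - s) ^ (n - k).

Lemma bb_step n s k : k < n -> bb n s k.+1 * k.+1 * (n - s) = bb n s k * (n - k) * s.
Proof.
move=> kn; rewrite /bb.
have e : n - k = (n - k.+1).+1 by lia.
rewrite [in (n - s) ^ (n - k)]e !expnS.
have h := mul_bin_left n k.
set c1 := 'C(n, k.+1); set c0 := 'C(n, k); set X := s ^ k; set Y := (n - s) ^ (n - k.+1).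
set d := n - k; set u := n - s.
have -> : c1 * (s * X) * Y * k.+1 * u = (k.+1 * c1) * (s * X * u * Y) by ring.
have -> : c0 * X * (u * Y) * d * s = (d * c0) * (s * X * u * Y) by ring.
by rewrite h.
Qed.

Lemma bb_max n s k : 0 < s < n -> k <= n -> bb n s k <= bb n s s.
Proof.
move=> /andP[s0 sn] kn.
have up i : s + i <= n -> bb n s (s + i) <= bb n s s.
  elim: i => [|i IH] hi; first by rewrite addn0.
  apply: leq_trans (IH _); last by lia.
  have st := @bb_step n s (s + i) ltac:(lia).
  rewrite addnS.
  have pos : 0 < (s + i).+1 * (n - s) by rewrite muln_gt0; apply/andP; split => //; lia.
  rewrite -(leq_pmul2r pos) mulnA st -mulnA leq_mul2l; apply/orP; right; nia.
have down i : i <= s -> bb n s (s - i) <= bb n s s.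
  elim: i => [|i IH] hi; first by rewrite subn0.
  apply: leq_trans (IH _); last by lia.
  have e : s - i = (s - i.+1).+1 by lia.
  rewrite e.
  have st := @bb_step n s (s - i.+1) ltac:(lia).
  have pos : 0 < (s - i.+1).+1 * (n - s) by rewrite muln_gt0; apply/andP; split => //; lia.
  rewrite -(leq_pmul2r pos) [in X in _ <= X]mulnA st -[bb n s _ * _ * s]mulnA leq_mul2l; apply/orP; right; nia.
case: (leqP s k) => h.
  by have := up (k - s) ltac:(lia); rewrite subnKC.
by have := down (s - k) ltac:(lia); rewrite subKn // ltnW.
Qed.

Lemma bb_sum n s : 0 < s < n -> n ^ n <= n.+1 * bb n s s.
Proof.
move=> hs.
have -> : n ^ n = \sum_(k < n.+1) bb n s k.
  have -> : n ^ n = ((n - s) + s) ^ n by rewrite subnK //; case/andP: hs => _ /ltnW.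
  rewrite expnDn. apply: eq_bigr => i _. rewrite /bb.
  by rewrite [(n - s) ^ _ * _]mulnC mulnA.
rewrite (_ : n.+1 * bb n s s = \sum_(k < n.+1) bb n s s); last by rewrite sum_nat_const card_ord.
by apply: leq_sum => i _; apply: bb_max => //; rewrite -ltnS.
Qed.
Lemma sum_bool_card n (A : {set 'I_n}) : (\sum_(j < n) ((j \in A) : nat))%N = #|A|.
Proof.
rewrite -sum1_card [in RHS]big_mkcond /=; apply: eq_bigr => j _; by case: (j \in A).
Qed.

Lemma card_slice n s : #|slice n s| = 'C(n, s).
Proof.
pose f (A : {set 'I_n}) := [ffun j => j \in A].
have finj : injective f.
  move=> A B /ffunP h; apply/setP => j; by have := h j; rewrite !ffunE.
have -> : slice n s = f @: [set A : {set 'I_n} | #|A| == s].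
  apply/setP => x; rewrite inE; apply/idP/imsetP.
  - move=> hx; exists [set j | x j]; first by rewrite inE -(eqP hx) -sum_bool_card; apply/eqP/eq_bigr => j _; rewrite inE.
    by apply/ffunP => j; rewrite ffunE inE.
  - case=> A; rewrite inE => /eqP <- ->; apply/eqP; rewrite -sum_bool_card; apply: eq_bigr => j _; by rewrite ffunE.
by rewrite card_imset // card_draws card_ord.
Qed.

Local Open Scope ring_scope.

Lemma jordan (R : realType) (y : R) : 0 <= y <= pi / 2 -> 2 * y / pi <= sin y.
Proof.
move=> /andP[y0 yp].
have pi0 := @pi_gt0 R.
have pin0 : pi != 0 :> R by rewrite gt_eqF.
case: (eqVneq y 0) => [->|yn0]; first by rewrite sin0 mulr0 mul0r.
case: (eqVneq y (pi/2)) => [->|ynp].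
  rewrite sin_pihalf; have -> : 2 * (pi / 2) / pi = 1 :> R.
    by move: pin0; generalize (pi : R) => P hP; field.
  done.
have ylt0 : 0 < y by rewrite lt_neqAle eq_sym yn0.
have yltp : y < pi / 2 by rewrite lt_neqAle ynp.
rewrite leNgt; apply/negP => hlt.
case: (@MVT R sin cos 0 y ylt0 (fun x _ => is_derive_sin x)).
  exact/continuous_subspaceT/continuous_sin.
move=> c1 c1in e1.
case: (@MVT R sin cos y (pi/2) yltp (fun x _ => is_derive_sin x)).
  exact/continuous_subspaceT/continuous_sin.
move=> c2 c2in e2.
move: c1in c2in; rewrite !in_itv /= => /andP[c10 c1y] /andP[yc2 c2p].
rewrite sin0 subr0 subr0 in e1.
rewrite sin_pihalf in e2.
have h1 : cos c1 < 2 / pi.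
  rewrite -(ltr_pM2r ylt0) -e1. by rewrite mulrAC.
have h2 : 2 / pi < cos c2.
  have hp : 0 < pi / 2 - y by rewrite subr_gt0.
  rewrite -(ltr_pM2r hp) -e2.
  have -> : 2 / pi * (pi / 2 - y) = 1 - 2 * y / pi.
    by move: pin0; generalize (pi:R) => P hP; field.
  by rewrite ltrD2l ltrN2.
have hc1 : c1 \in `[0, pi] by rewrite in_itv /=; apply/andP; split; lra.
have hc2 : c2 \in `[0, pi] by rewrite in_itv /=; apply/andP; split; lra.
have : cos c2 < cos c1 by rewrite ltr_cos //; lra.
lra.
Qed.

Lemma one_cos (R : realType) (x : R) : `|x| <= pi -> 2 * x ^+ 2 / pi ^+ 2 <= 1 - cos x.
Proof.
move=> hx.
have pi0 := @pi_gt0 R.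
have pin0 : pi != 0 :> R by rewrite gt_eqF.
set y := `|x| / 2.
have hy : 0 <= y <= pi / 2.
  apply/andP; split; first by rewrite /y divr_ge0.
  by rewrite /y ler_pM2r.
have j := @jordan R y hy.
have e : 2 * y / pi = `|x| / pi by rewrite /y; move: pin0; generalize (pi:R) => P hP; field.
rewrite e in j.
have c : cos x = 1 - 2 * sin y ^+ 2.
  rewrite -cos_norm.
  have -> : `|x| = y *+ 2 by rewrite /y mulr2n; field.
  by rewrite cos_mulr2n cos2sin2 mulr2n; ring.
rewrite c.
have a0 : 0 <= `|x| / pi by rewrite divr_ge0 // ltW.
have : (`|x| / pi) ^+ 2 <= sin y ^+ 2 by nra.
rewrite expr_div_n real_normK ?num_real //.
move=> h.
have -> : 2 * x ^+ 2 / pi ^+ 2 = 2 * (x ^+ 2 / pi ^+ 2) by rewrite mulrA.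
lra.
Qed.

Local Open Scope complex_scope.

Lemma cexpiD (R : realType) (x y : R) : cexpi (x + y) = cexpi x * cexpi y.
Proof.
rewrite /cexpi sinD cosD /=.
congr (_ +i* _); ring.
Qed.

Lemma cexpi0 (R : realType) : cexpi (0 : R) = 1.
Proof. by rewrite /cexpi sin0 cos0. Qed.

Lemma cexpi_sum (R : realType) (I : Type) (r : seq I) (P : pred I) (f : I -> R) :
  cexpi (\sum_(i <- r | P i) f i) = \prod_(i <- r | P i) cexpi (f i).
Proof. exact: (big_morph _ (@cexpiD R) (@cexpi0 R)). Qed.

Lemma cexpiMn (R : realType) (x : R) k : cexpi (x *+ k) = cexpi x ^+ k.
Proof.
elim: k => [|k IH]; first by rewrite mulr0n expr0 cexpi0.
by rewrite mulrS cexpiD IH exprS.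
Qed.

Lemma cexpi_2pi (R : realType) : cexpi (pi *+ 2 : R) = 1.
Proof. by rewrite /cexpi cos2pi sin2pi. Qed.

Lemma norm_cexpi (R : realType) (x : R) : `|cexpi x| = 1.
Proof.
by rewrite normc_def /= cos2Dsin2 sqrtr1.
Qed.

Lemma cexpi_neq1 (R : realType) (y : R) : 0 < y < pi -> cexpi (y *+ 2) != 1.
Proof.
move=> hy; have s0 := sin_gt0_pi hy.
apply/negP => /eqP h.
have [hc hs] : cos (y *+ 2) = 1 /\ sin (y *+ 2) = 0 by case: h.
rewrite sin_mulr2n in hs.
have c0 : cos y = 0.
  move/eqP: hs; rewrite mulrn_eq0 /= mulf_eq0 => /orP[/eqP //|]; by rewrite gt_eqF.
move: hc; rewrite cos_mulr2n c0 expr0n /= mul0rn => /eqP; rewrite -subr_eq0; lra.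
Qed.

Definition omega (R : realType) (N : nat) : R[i] := cexpi (pi *+ 2 / N%:R).

Lemma omegaN (R : realType) N : (0 < N)%N -> omega R N ^+ N = 1.
Proof.
move=> N0; rewrite /omega -cexpiMn.
have Nn : (N%:R : R) != 0 by rewrite pnatr_eq0 -lt0n.
have -> : (pi *+ 2 / N%:R) *+ N = pi *+ 2 :> R.
  by rewrite -mulr_natr divfK.
exact: cexpi_2pi.
Qed.

Lemma omega_neq1 (R : realType) N r : (0 < r < N)%N -> omega R N ^+ r != 1.
Proof.
move=> /andP[r0 rN].
have N0 : (0 < N)%N by apply: leq_trans rN.
have Nn : (N%:R : R) != 0 by rewrite pnatr_eq0 -lt0n.
have NR : (0 : R) < N%:R by rewrite ltr0n.
have rR : (0 : R) < r%:R by rewrite ltr0n.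
have rNR : (r%:R : R) < N%:R by rewrite ltr_nat.
rewrite /omega -cexpiMn.
have -> : (pi *+ 2 / N%:R) *+ r = (pi * r%:R / N%:R) *+ 2 :> R.
  rewrite -(mulr_natr (pi *+ 2 / N%:R)) -(mulr_natr (pi * r%:R / N%:R)) -(mulr_natr pi 2).
  ring.
apply: cexpi_neq1; apply/andP; split.
  by rewrite divr_gt0 // mulr_gt0 // pi_gt0.
rewrite ltr_pdivrMr // ltr_pM2l //; exact: pi_gt0.
Qed.

Lemma omega_orth (R : realType) N e : (0 < e < N + N)%N ->
  \sum_(m < N) (omega R N ^+ e) ^+ m = if e == N then N%:R else 0.
Proof.
move=> /andP[e0 eN].
have N0 : (0 < N)%N by case: N eN {e0} => //; rewrite addn0 ltn0.
case: eqP => [->|ne].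
  rewrite omegaN // (eq_bigr (fun _ => 1)); last by move=> m _; exact: expr1n.
  by rewrite sumr_const card_ord.
have w1 : omega R N ^+ e != 1.
  case: (ltnP e N) => h; first by apply: omega_neq1; rewrite e0.
  have h' : (N < e)%N by rewrite ltn_neqAle h andbT; apply/eqP => E; apply: ne.
  rewrite -(subnK (ltnW h')) exprD omegaN // mulr1.
  apply: omega_neq1; apply/andP; split; first by rewrite subn_gt0.
  by rewrite ltn_subLR // ltnW.
have := subrX1 (omega R N ^+ e) N.
rewrite -exprM mulnC exprM omegaN // expr1n subrr => /esym/eqP.
by rewrite mulf_eq0 subr_eq0 (negbTE w1) /= => /eqP.
Qed.
Definition kx n (x : {ffun 'I_n -> bool}) := (\sum_(j < n) (x j : nat))%N.
Arguments kx {n}.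

Lemma kx_le n (x : {ffun 'I_n -> bool}) : (kx x <= n)%N.
Proof.
rewrite /kx -[X in (_ <= X)%N]card_ord -sum1_card.
by apply: leq_sum => j _; case: (x j).
Qed.

Lemma expand (R : realType) n (p q : R) (d : 'I_n -> R) (z : R[i]) :
  \prod_(j < n) (q%:C + p%:C * cexpi (d j) * z) =
  \sum_(x : {ffun 'I_n -> bool})
     (p%:C ^+ kx x * q%:C ^+ (n - kx x) * z ^+ kx x) * cexpi (\sum_(j < n) d j * (x j)%:R).
Proof.
have h j : q%:C + p%:C * cexpi (d j) * z =
    \sum_(b : bool) (if b then p%:C * cexpi (d j) * z else q%:C).
  by rewrite big_bool /= addrC.
rewrite (eq_bigr _ (fun j _ => h j)) bigA_distr_bigA /=.
apply: eq_bigr => x _.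
have h2 j : (if x j then p%:C * cexpi (d j) * z else q%:C) =
   p%:C ^+ (x j : nat) * q%:C ^+ (1 - (x j : nat)) * z ^+ (x j : nat) * cexpi (d j * (x j)%:R).
  case: (x j) => /=.
    by rewrite subnn expr0 !expr1 mulr1n !mulr1; ring.
  by rewrite subn0 !expr0 expr1 mulr0n mulr0 cexpi0 mul1r !mulr1.
rewrite (eq_bigr _ (fun j _ => h2 j)) !big_split /= !prodrXr cexpi_sum.
congr (_ * _ * _ * _).
congr (_ ^+ _).
have : (\sum_(j < n) (1 - (x j : nat)) + kx x = n)%N.
  rewrite /kx -big_split /= -[X in _ = X]card_ord -sum1_card.
  by apply: eq_bigr => j _; case: (x j).
move=> e; apply/eqP; by rewrite -(eqn_add2r (kx x)) subnK ?kx_le // e.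
Qed.

Lemma key (R : realType) n s (hs : (s <= n)%N) (p q : R) (d : 'I_n -> R) :
  \sum_(m < n.+1) (omega R n.+1 ^+ (n.+1 - s)) ^+ m *
     \prod_(j < n) (q%:C + p%:C * cexpi (d j) * omega R n.+1 ^+ m)
  = n.+1%:R * (p%:C ^+ s * q%:C ^+ (n - s)) *
      \sum_(x in slice n s) cexpi (\sum_(j < n) d j * (x j)%:R).
Proof.
set w := omega R n.+1.
under eq_bigr => m _ do rewrite expand mulr_sumr.
rewrite exchange_big /= mulr_sumr [RHS]big_mkcond /=.
apply: eq_bigr => x _.
set c := p%:C ^+ kx x * q%:C ^+ (n - kx x).
set G := cexpi _.
have e m : (w ^+ (n.+1 - s)) ^+ m * (c * (w ^+ m) ^+ kx x * G) =
           (c * G) * (w ^+ (n.+1 - s + kx x)) ^+ m.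
  rewrite -!exprM mulnDl exprD [(kx x * m)%N]mulnC [(m * kx x)%N]mulnC.
  ring.
under eq_bigr => m _ do rewrite e.
rewrite -mulr_sumr omega_orth; last first.
  move: (@kx_le n x) => kl; apply/andP; split; lia.
rewrite inE -/(kx x).
have -> : (n.+1 - s + kx x == n.+1)%N = (kx x == s)%N by apply/eqP/eqP; lia.
case: eqP => [ks|_]; last exact: mulr0.
by rewrite /c ks; ring.
Qed.

Lemma normC_real (R : realType) (z : R[i]) : exists2 r : R, 0 <= r & `|z| = r%:C.
Proof. by exists (Num.sqrt ((complex.Re z)^+2 + (complex.Im z)^+2)); rewrite ?sqrtr_ge0 // normc_def. Qed.

Lemma sqnorm_factor (R : realType) (p phi : R) :
  `|(1 - p)%:C + p%:C * cexpi phi| ^+ 2 = (1 - 2 * p * (1 - p) * (1 - cos phi))%:C.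
Proof.
rewrite -add_Re2_Im2 /cexpi /=; congr (_%:C).
transitivity ((1 - p + p * cos phi) ^+ 2 + p ^+ 2 * sin phi ^+ 2); first by ring.
rewrite sin2cos2; ring.
Qed.

Lemma prod_bound (R : realType) n (p : R) (phi : 'I_n -> R) : 0 <= p <= 1 ->
  `|\prod_(j < n) ((1 - p)%:C + p%:C * cexpi (phi j))| <=
     (expR (- (p * (1 - p) * \sum_(j < n) (1 - cos (phi j)))))%:C.
Proof.
move=> /andP[p0 p1].
have [r r0 hr] := @normC_real R (\prod_(j < n) ((1 - p)%:C + p%:C * cexpi (phi j))).
rewrite hr lecR.
set E := expR _.
have E0 : 0 <= E by apply: expR_ge0.
have hsq : r ^+ 2 <= E ^+ 2.
  rewrite -lecR rmorphXn /= -hr -normrX -prodrXl.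
  rewrite normr_prod.
  under eq_bigr => j _ do rewrite normrX sqnorm_factor.
  rewrite -rmorph_prod lecR /E -expRM_natl.
  have -> : 2%:R * - (p * (1 - p) * \sum_(j0 < n) (1 - cos (phi j0))) =
      \sum_(j0 < n) (- (2 * p * (1 - p) * (1 - cos (phi j0)))).
    by rewrite sumrN -mulr_sumr; ring.
  rewrite expR_sum.
  apply: ler_prod => j _; apply/andP; split.
    have c1 := cos_le1 (phi j); have c2 := cos_geN1 (phi j).
    have a0 : 0 <= p * (1 - p) by nra.
    have a1 : 4 * (p * (1 - p)) <= 1 by have := sqr_ge0 (2 * p - 1); nra.
    have : p * (1 - p) * (1 - cos (phi j)) <= 2 * (p * (1 - p)) by nra.
    nra.
  apply: le_trans (expR_ge1Dx _); rewrite le_eqVlt; apply/orP; left; apply/eqP; ring.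
nra.
Qed.

Lemma sum_sq_diff (R : realType) n (f : 'I_n -> R) :
  \sum_(j < n) \sum_(k < n) (f j - f k) ^+ 2 =
  2 * n%:R * \sum_(j < n) f j ^+ 2 - 2 * (\sum_(j < n) f j) ^+ 2.
Proof.
set A1 := \sum_(j < n) f j; set A2 := \sum_(j < n) f j ^+ 2.
have inner j : \sum_(k < n) (f j - f k) ^+ 2 = n%:R * f j ^+ 2 + A2 - 2 * f j * A1.
  rewrite (eq_bigr (fun k => f j ^+ 2 + f k ^+ 2 - 2 * f j * f k)); last by move=> k _; ring.
  by rewrite sumrB big_split /= sumr_const card_ord -mulr_sumr -/A1 -/A2; ring.
rewrite (eq_bigr _ (fun j _ => inner j)) sumrB big_split /= sumr_const card_ord.
rewrite -mulr_sumr -mulr_suml -/A2 -/A1 mulr_natl.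
rewrite -mulr_sumr -/A1; ring.
Qed.

Lemma var_identity (R : realType) n (a : 'I_n -> R) : (0 < n)%N ->
  \sum_(j < n) \sum_(k < n) (a j - a k) ^+ 2 = 2 * n%:R ^+ 2 * varJ a.
Proof.
move=> n0.
have nn : (n%:R : R) != 0 by rewrite pnatr_eq0 -lt0n.
rewrite sum_sq_diff /varJ /meanJ.
set A1 := \sum_(j < n) a j; set A2 := \sum_(j < n) a j ^+ 2.
have -> : \sum_(j < n) (a j - n%:R^-1 * A1) ^+ 2 = A2 - 2 * (n%:R^-1 * A1) * A1 + n%:R * (n%:R^-1 * A1) ^+ 2.
  rewrite (eq_bigr (fun j => a j ^+ 2 - 2 * (n%:R^-1 * A1) * a j + (n%:R^-1 * A1) ^+ 2)); last by move=> j _; ring.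
  by rewrite big_split sumrB /= sumr_const card_ord -mulr_sumr -/A1 -/A2 [n%:R * _]mulr_natl.
idtac.
field. exact: nn.
Qed.

Lemma cos_sum_bound (R : realType) n (a : 'I_n -> R) (t th : R) : (0 < n)%N ->
  (forall j k : 'I_n, `|(a j - a k) * t| <= pi) ->
  2 * t ^+ 2 * varJ a * n%:R / pi ^+ 2 <= \sum_(j < n) (1 - cos (t * a j + th)).
Proof.
move=> n0 ht.
have pi0 := @pi_gt0 R.
have N0 : (0 : R) < n%:R by rewrite ltr0n.
set C := \sum_(j < n) cos (t * a j); set S := \sum_(j < n) sin (t * a j).
have eX : \sum_(j < n) (1 - cos (t * a j + th)) = n%:R - (cos th * C - sin th * S).
  rewrite sumrB sumr_const card_ord.
  under eq_bigr do rewrite cosD.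
  rewrite sumrB -!mulr_suml -/C -/S; ring.
have hX : (cos th * C - sin th * S) ^+ 2 <= C ^+ 2 + S ^+ 2.
  have e : (cos th * C - sin th * S) ^+ 2 + (sin th * C + cos th * S) ^+ 2
           = (cos th ^+ 2 + sin th ^+ 2) * (C ^+ 2 + S ^+ 2) by ring.
  rewrite cos2Dsin2 mul1r in e.
  have := sqr_ge0 (sin th * C + cos th * S); lra.
have eCS : C ^+ 2 + S ^+ 2 = \sum_(j < n) \sum_(k < n) cos (t * a j - t * a k).
  under eq_bigr do under eq_bigr do rewrite cosB.
  under eq_bigr do rewrite big_split /= -!mulr_sumr -/C -/S.
  by rewrite big_split /= -!mulr_suml -/C -/S !expr2.
have hJ : \sum_(j < n) \sum_(k < n) (2 * ((a j - a k) ^+ 2 * t ^+ 2) / pi ^+ 2)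
          <= \sum_(j < n) \sum_(k < n) (1 - cos (t * a j - t * a k)).
  apply: ler_sum => j _; apply: ler_sum => k _.
  have -> : (a j - a k) ^+ 2 * t ^+ 2 = (t * a j - t * a k) ^+ 2 by ring.
  apply: one_cos.
  have -> : t * a j - t * a k = (a j - a k) * t by ring.
  exact: ht.
have eL : \sum_(j < n) \sum_(k < n) (2 * ((a j - a k) ^+ 2 * t ^+ 2) / pi ^+ 2)
          = 2 * t ^+ 2 / pi ^+ 2 * (2 * n%:R ^+ 2 * varJ a).
  rewrite -var_identity // mulr_sumr; apply: eq_bigr => j _.
  rewrite mulr_sumr; apply: eq_bigr => k _; ring.
have eR : \sum_(j < n) \sum_(k < n) (1 - cos (t * a j - t * a k))
          = n%:R ^+ 2 - (C ^+ 2 + S ^+ 2).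
  rewrite eCS.
  under eq_bigr do rewrite sumrB sumr_const card_ord.
  by rewrite sumrB sumr_const card_ord -(mulr_natr (n%:R : R) n) expr2.
rewrite eL eR in hJ.
rewrite eX.
set X := cos th * C - sin th * S.
set Z := t ^+ 2 * varJ a / pi ^+ 2.
have -> : 2 * t ^+ 2 * varJ a * n%:R / pi ^+ 2 = 2 * n%:R * Z by rewrite /Z; ring.
have hJ' : 4 * n%:R ^+ 2 * Z <= n%:R ^+ 2 - X ^+ 2.
  have -> : 4 * n%:R ^+ 2 * Z = 2 * t ^+ 2 / pi ^+ 2 * (2 * n%:R ^+ 2 * varJ a) by rewrite /Z; ring.
  by apply: le_trans hJ _; rewrite lerD2l lerN2.
have := sqr_ge0 (n%:R - X).
nra.
Qed.

Lemma cC_mulX (R : realType) (x y : R) k l :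
  (x ^+ k * y ^+ l)%:C = x%:C ^+ k * y%:C ^+ l :> R[i].
Proof. by rewrite rmorphM !rmorphXn. Qed.

Lemma natC (R : realType) k : (k%:R : R[i]) = (k%:R : R)%:C.
Proof. by rewrite rmorph_nat. Qed.

Lemma invC (R : realType) (x : R) : (x%:C)^-1 = (x^-1)%:C :> R[i].
Proof. by rewrite fmorphV. Qed.

Lemma mulC (R : realType) (x y : R) : x%:C * y%:C = (x * y)%:C :> R[i].
Proof. by rewrite rmorphM. Qed.

Lemma charfun_le1 (R : realType) n s (a : 'I_n -> R) t : `|slice_charfun s a t| <= 1.
Proof.
rewrite /slice_charfun normrM normfV normr_nat.
have h : `|\sum_(x in slice n s) cexpi (t * \sum_(j < n) a j * (x j)%:R)| <= #|slice n s|%:R.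
  apply: le_trans (ler_norm_sum _ _ _) _.
  rewrite (eq_bigr (fun _ => 1)); last by move=> x _; rewrite norm_cexpi.
  by rewrite sumr_const.
case: (eqVneq (#|slice n s|%:R : R[i]) 0) => [->|nz].
  by rewrite invr0 mul0r ler01.
apply: le_trans (ler_wpM2l _ h) _; first by rewrite invr_ge0 ler0n.
by rewrite mulVf.
Qed.

Theorem lemma2p8 (R : realType) (n s : nat) (hs : (s <= n)%N)
  (a : 'I_n -> R) (t : R)
  (ht : forall j k : 'I_n, `|(a j - a k) * t| <= pi) :
  let p : R := s%:R / n%:R in
  `|slice_charfun s a t| <=
    ((n.+1)%:R * expR (- (2 * p * (1 - p) * t ^+ 2 * varJ a * n%:R / pi ^+ 2)))%:C.
Proof.
cbv zeta.
set p := (s%:R / n%:R : R).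
case: (boolP ((0 < s) && (s < n))%N) => [/andP[s0 sn] | hc].
  have n0 : (0 < n)%N by apply: leq_trans sn.
  have nR : (0 : R) < n%:R by rewrite ltr0n.
  have nRn : (n%:R : R) != 0 by rewrite gt_eqF.
  have p01 : 0 <= p <= 1.
    apply/andP; split; first by rewrite /p divr_ge0 // ler0n.
    by rewrite /p ler_pdivrMr // mul1r ler_nat.
  pose d := fun j => t * a j.
  set q := 1 - p.
  set B := expR _.
  have eT : slice_charfun s a t = (#|slice n s|%:R)^-1 *
       \sum_(x in slice n s) cexpi (\sum_(j < n) d j * (x j)%:R).
    rewrite /slice_charfun; congr (_ * _); apply: eq_bigr => x _; congr cexpi.
    by rewrite mulr_sumr; apply: eq_bigr => j _; rewrite mulrA.
  set T := \sum_(x in slice n s) _ in eT.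
  have hk := @key R n s hs p q d.
  have hP : forall m : 'I_n.+1,
      `|\prod_(j < n) (q%:C + p%:C * cexpi (d j) * omega R n.+1 ^+ m)| <= B%:C.
    move=> m.
    have -> : \prod_(j < n) (q%:C + p%:C * cexpi (d j) * omega R n.+1 ^+ m) =
        \prod_(j < n) ((1 - p)%:C + p%:C * cexpi (t * a j + (pi *+ 2 / n.+1%:R) *+ m)).
      by apply: eq_bigr => j _; rewrite /omega -cexpiMn cexpiD mulrA.
    apply: le_trans (@prod_bound R n p _ p01) _.
    rewrite lecR ler_expR lerN2.
    have cb := @cos_sum_bound R n a t ((pi *+ 2 / n.+1%:R) *+ m) n0 ht.
    have pq0 : 0 <= p * (1 - p) by case/andP: p01 => ? ?; apply: mulr_ge0 => //; rewrite subr_ge0.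
    have -> : 2 * p * (1 - p) * t ^+ 2 * varJ a * n%:R / pi ^+ 2 =
       p * (1 - p) * (2 * t ^+ 2 * varJ a * n%:R / pi ^+ 2) by ring.
    exact: ler_wpM2l.
  have hsum : `|\sum_(m < n.+1) (omega R n.+1 ^+ (n.+1 - s)) ^+ m *
     \prod_(j < n) (q%:C + p%:C * cexpi (d j) * omega R n.+1 ^+ m)| <= n.+1%:R * B%:C.
    apply: le_trans (ler_norm_sum _ _ _) _.
    rewrite (_ : n.+1%:R * B%:C = \sum_(m < n.+1) B%:C); last by rewrite sumr_const card_ord mulr_natl.
    apply: ler_sum => m _.
    by rewrite normrM !normrX /omega norm_cexpi !expr1n mul1r; exact: hP.
  rewrite hk in hsum.
  have [rT rT0 hrT] := @normC_real R T.
  set r := p ^+ s * q ^+ (n - s).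
  have r0 : 0 <= r.
    case/andP: p01 => p0 p1; rewrite /r /q; apply: mulr_ge0; apply: exprn_ge0; lra.
  have er : p%:C ^+ s * q%:C ^+ (n - s) = r%:C by rewrite /r cC_mulX.
  rewrite er !normrM normr_nat hrT ger0_norm ?ler0c // !natC in hsum.
  rewrite -!rmorphM /= lecR in hsum.
  have hrB : r * rT <= B.
    by rewrite -(ler_pM2l (ltr0n R (n.+1))) mulrA; move: hsum; rewrite mulrA.
  rewrite eT normrM normfV normr_nat hrT -(rmorph_nat (real_complex R)) -fmorphV -rmorphM lecR.
  rewrite card_slice.
  have c0 : (0 : R) < 'C(n, s)%:R by rewrite ltr0n bin_gt0.
  have N0 : (0 : R) < n.+1%:R by rewrite ltr0n.
  have hnat := @bb_sum n s ltac:(by rewrite s0 sn).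
  have hR : (n%:R : R) ^+ n <= n.+1%:R * ('C(n, s)%:R * s%:R ^+ s * (n%:R - s%:R) ^+ (n - s)).
    by move: hnat; rewrite -(ler_nat R) /bb !natrM !natrX natrB.
  have e1 : s%:R / n%:R * n%:R = s%:R :> R by rewrite divfK.
  have e2 : (1 - s%:R / n%:R) * n%:R = n%:R - s%:R :> R by rewrite mulrBl mul1r e1.
  have er2 : r * n%:R ^+ n = s%:R ^+ s * (n%:R - s%:R) ^+ (n - s).
    have -> : (n%:R : R) ^+ n = n%:R ^+ s * n%:R ^+ (n - s) by rewrite -exprD subnKC.
    have -> : (s%:R : R) ^+ s * (n%:R - s%:R) ^+ (n - s) =
       (s%:R / n%:R * n%:R) ^+ s * ((1 - s%:R / n%:R) * n%:R) ^+ (n - s) by rewrite e1 e2.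
    rewrite /r /q /p !exprMn; ring.
  have nn0 : (0 : R) < n%:R ^+ n by rewrite exprn_gt0.
  have hb : 1 <= n.+1%:R * (r * 'C(n, s)%:R).
    rewrite -(ler_pM2r nn0) mul1r.
    apply: le_trans hR _; rewrite le_eqVlt; apply/orP; left; apply/eqP.
    transitivity (n.+1%:R * 'C(n, s)%:R * (r * n%:R ^+ n)); first by rewrite er2; ring.
    ring.
  rewrite mulrC ler_pdivrMr //.
  have : 0 <= n.+1%:R * 'C(n, s)%:R :> R by rewrite mulr_ge0 // ltW.
  nra.
have pq : p * (1 - p) = 0.
  have : ((s == 0) || (s == n))%N.
    move: hc; rewrite negb_and -!leqNgt leqn0 => /orP[->//|h].
    by apply/orP; right; rewrite eqn_leq hs h.
  case/orP => /eqP E; rewrite /p E; first by rewrite mul0r mul0r.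
  case: (posnP n) => [->|n0]; first by rewrite invr0 mulr0 mul0r.
  by rewrite divff ?subrr ?mulr0 // pnatr_eq0 -lt0n.
have -> : 2 * p * (1 - p) * t ^+ 2 * varJ a * n%:R / pi ^+ 2 = 0.
  by rewrite -(mulrA 2 p) pq mulr0 !mul0r.
rewrite oppr0 expR0 mulr1.
apply: le_trans (@charfun_le1 R n s a t) _.
by rewrite -(rmorph1 (real_complex R)) lecR ler1n.
Qed.
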